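(* Let $n\ge0$ be an integer and $n_1=\lceil n/2\rceil$. If $g\in K a(\varpi^{n_1})$, then $t(g)=\min(n_1-2l(g),-n_1)$.
   Context: $F$ is a non-archimedean local field of characteristic $0$ with ring of integers $\mathfrak{o}$, maximal ideal $\mathfrak{p}$, uniformizer $\varpi$; $U_j=\{x\in\mathfrak{o}^\times: v(x-1)\ge j\}$. $G=\mathrm{GL}_2(F)$, $K=\mathrm{GL}_2(\mathfrak{o})$, $K_1(\mathfrak{p}^n)=K\cap\begin{pmatrix}1+\mathfrak{p}^n&\mathfrak{o}\\\mathfrak{p}^n&\mathfrak{o}\end{pmatrix}$, $w=\begin{pmatrix}0&1\\-1&0\end{pmatrix}$, $a(y)=\mathrm{diag}(y,1)$, $n(x)=\begin{pmatrix}1&x\\0&1\end{pmatrix}$, $Z$ the center, $N=\{n(x)\}$. There is a disjoint decomposition $G=\bigsqcup_{t\in\mathbb{Z}}\bigsqcup_{0\le l\le n}\bigsqcup_{v\in\mathfrak{o}^\times/U_{\min(l,n-l)}}ZN a(\varpi^t)wn(\varpi^{-l}v)K_1(\mathfrak{p}^n)$; for $g\in G$, $t(g)$ and $l(g)$ are the unique integers with $0\le l(g)\le n$ and $g\in ZNa(\varpi^{t(g)})wn(\varpi^{-l(g)}v)K_1(\mathfrak{p}^n)$ for some $v\in\mathfrak{o}^\times$. *)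

(* Defs.v *)
From HB Require Import structures.
From mathcomp Require Import all_boot all_order all_algebra.
Set Implicit Arguments. Unset Strict Implicit. Unset Printing Implicit Defensive.
Import Order.TTheory GRing.Theory Num.Theory.
Local Open Scope ring_scope.

Section Defs.
Variable F : fieldType.
(* v : F -> int is the normalized discrete valuation; its value at 0 is
   irrelevant (never used): "x in p^k" is encoded by [vge v x k]. *)
Variable v : F -> int.

Definition vge (x : F) (k : int) : Prop := x = 0 \/ k <= v x.
Definition in_o (x : F) : Prop := vge x 0.
Definition unit_o (x : F) : Prop := x != 0 /\ v x = 0.

Definition is_normalized_dval : Prop :=
  [/\ forall x y, x != 0 -> y != 0 -> v (x * y) = v x + v y,
      forall x y, x != 0 -> y != 0 -> x + y != 0 ->
        Num.min (v x) (v y) <= v (x + y)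
    & exists pi : F, pi != 0 /\ v pi = 1].

Definition v_complete : Prop :=
  forall u : nat -> F,
    (forall k : int, exists N, forall m p, (N <= m)%N -> (N <= p)%N ->
        vge (u m - u p) k) ->
    exists L, forall k : int, exists N, forall m, (N <= m)%N -> vge (u m - L) k.

Definition finite_residue_field : Prop :=
  exists s : seq F, forall x, in_o x -> exists2 y, y \in s & vge (x - y) 1.

Definition nonarch_local_field_char0 : Prop :=
  [/\ is_normalized_dval, v_complete, finite_residue_field
    & [pchar F] =i pred0].

Definition mx2 (a b c d : F) : 'M[F]_2 :=
  \matrix_(i < 2, j < 2)
    if i == 0 :> nat then (if j == 0 :> nat then a else b)
    else (if j == 0 :> nat then c else d).

Definition wmx : 'M[F]_2 := mx2 0 1 (-1) 0.
Definition amx (y : F) : 'M[F]_2 := mx2 y 0 0 1.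
Definition nmx (x : F) : 'M[F]_2 := mx2 1 x 0 1.

Definition inK (k : 'M[F]_2) : Prop :=
  [/\ forall i j, in_o (k i j) & unit_o (\det k)].

Definition inK1 (n : nat) (k : 'M[F]_2) : Prop :=
  [/\ inK k, vge (k 0 0 - 1) (Posz n) & vge (k 1 0) (Posz n)].

Definition in_cell (pi : F) (n : nat) (t : int) (l : nat) (g : 'M[F]_2) : Prop :=
  exists z x u k, [/\ z != 0, unit_o u, inK1 n k &
    g = z%:M *m nmx x *m amx (pi ^ t) *m wmx *m nmx (pi ^ (- l%:Z) * u) *m k].

End Defs.

(* Main.v *)
Require Import Defs.
From HB Require Import structures.
From mathcomp Require Import all_boot all_order all_algebra.
From mathcomp Require Import zify ring lra.
Import Order.TTheory GRing.Theory Num.Theory.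
Local Open Scope ring_scope.
Set Implicit Arguments. Unset Strict Implicit.
Lemma mx2_det (F : fieldType) (a b c d : F) : \det (mx2 a b c d) = a * d - b * c.
Proof.
rewrite (expand_det_row _ 0) !big_ord_recr big_ord0 /= /cofactor !det_mx11 !mxE /=.
rewrite add0r expr0 expr1 mul1r mulN1r mulrN; done.
Qed.


Lemma v1 (F : fieldType) (v : F -> int) (hv : is_normalized_dval v) : v 1 = 0.
Proof.
case: hv => hM _ _; have := hM 1 1 (oner_neq0 _) (oner_neq0 _); rewrite mulr1; lia.
Qed.

Lemma vM (F : fieldType) (v : F -> int) (hv : is_normalized_dval v) x y :
  x != 0 -> y != 0 -> v (x * y) = v x + v y.
Proof. by case: hv => hM _ _; apply: hM. Qed.

Lemma vV (F : fieldType) (v : F -> int) (hv : is_normalized_dval v) x :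
  x != 0 -> v (x^-1) = - v x.
Proof.
move=> x0; have := vM hv x0 (invr_neq0 x0); rewrite mulfV // (v1 hv); lia.
Qed.

Lemma vN1 (F : fieldType) (v : F -> int) (hv : is_normalized_dval v) : v (-1) = 0.
Proof.
have h : (-1 : F) != 0 by rewrite oppr_eq0 oner_neq0.
have := vM hv h h; rewrite mulrNN mulr1 (v1 hv); lia.
Qed.

Lemma vN (F : fieldType) (v : F -> int) (hv : is_normalized_dval v) x :
  x != 0 -> v (- x) = v x.
Proof.
move=> x0; by rewrite -mulN1r (vM hv) ?(vN1 hv) ?add0r // oppr_eq0 oner_neq0.
Qed.

Lemma vXn (F : fieldType) (v : F -> int) (hv : is_normalized_dval v) x (m : nat) :
  x != 0 -> v (x ^+ m) = v x *+ m.
Proof.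
move=> x0; elim: m => [|m IH]; first by rewrite expr0 (v1 hv).
by rewrite exprS (vM hv) ?expf_neq0 // IH mulrS.
Qed.

Lemma vXz (F : fieldType) (v : F -> int) (hv : is_normalized_dval v) x (m : int) :
  x != 0 -> v x = 1 -> v (x ^ m) = m.
Proof.
move=> x0 x1; case: m => m.
  by rewrite /exprz (vXn hv) // x1 natz.
rewrite /exprz (vV hv) ?expf_neq0 // (vXn hv) // x1 NegzE natz; lia.
Qed.

Lemma vge_add (F : fieldType) (v : F -> int) (hv : is_normalized_dval v) x y k :
  vge v x k -> vge v y k -> vge v (x + y) k.
Proof.
case: hv => _ hD _.
case=> [->|hx]; first by rewrite add0r.
case=> [->|hy]; first by rewrite addr0; right.
have [x0|x0] := eqVneq x 0; first by rewrite x0 add0r; right.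
have [y0|y0] := eqVneq y 0; first by rewrite y0 addr0; right.
have [s0|s0] := eqVneq (x + y) 0; first by left.
right; apply: le_trans (hD _ _ x0 y0 s0); by rewrite le_min hx hy.
Qed.

Lemma vge_mul (F : fieldType) (v : F -> int) (hv : is_normalized_dval v) x y a b :
  vge v x a -> vge v y b -> vge v (x * y) (a + b).
Proof.
case=> [->|hx]; first by rewrite mul0r; left.
case=> [->|hy]; first by rewrite mulr0; left.
have [x0|x0] := eqVneq x 0; first by rewrite x0 mul0r; left.
have [y0|y0] := eqVneq y 0; first by rewrite y0 mulr0; left.
by right; rewrite (vM hv) // lerD.
Qed.

Lemma vge_le (F : fieldType) (v : F -> int) x a b :
  vge v x a -> b <= a -> vge v x b.
Proof. by case=> [->|h] hb; [left|right; apply: le_trans h]. Qed.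

Lemma vge_opp (F : fieldType) (v : F -> int) (hv : is_normalized_dval v) x a :
  vge v x a -> vge v (- x) a.
Proof.
case=> [->|h]; first by rewrite oppr0; left.
have [x0|x0] := eqVneq x 0; first by rewrite x0 oppr0; left.
by right; rewrite (vN hv).
Qed.

Lemma vge_strict (F : fieldType) (v : F -> int) (hv : is_normalized_dval v) x y :
  y != 0 -> vge v x (v y + 1) -> x + y != 0 /\ v (x + y) = v y.
Proof.
move=> y0 hx.
have [x0|x0] := eqVneq x 0; first by rewrite x0 add0r.
case: hx => [/eqP|hx]; first by rewrite (negPf x0).
have s0 : x + y != 0.
  apply/eqP => e; move: hx; rewrite (_ : x = - y); last by rewrite -[x](addrK y) e add0r.
  rewrite (vN hv) //; lia.
split=> //.
have h1 : vge v (x + y) (v y).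
  apply: vge_add => //; [apply: vge_le; [right; exact: hx|lia] | by right].
have h2 : vge v ((x + y) + (- x)) (Num.min (v (x+y)) (v y + 1)).
  apply: vge_add => //; first by (right; rewrite ge_min lexx).
  by apply: vge_opp => //; right; rewrite ge_min hx orbT.
move: h2; rewrite addrC addKr; case=> [/eqP|]; first by rewrite (negPf y0).
case: h1 => [/eqP|]; first by rewrite (negPf s0).
lia.
Qed.
Lemma not_unit_vge1 (F : fieldType) (v : F -> int) x : unit_o v x -> vge v x 1 -> False.
Proof. by case=> /negPf x0 vx [/eqP|]; [rewrite x0|rewrite vx]. Qed.

Lemma unit_of (F : fieldType) (v : F -> int) x : in_o v x -> ~ vge v x 1 -> unit_o v x.
Proof.
case=> [->|h] hn; first by exfalso; apply: hn; left.
have x0 : x != 0 by apply/eqP => e; apply: hn; left.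
split=> //; suff : ~ (1 <= v x) by lia.
by move=> h1; apply: hn; right.
Qed.

Lemma unit_add (F : fieldType) (v : F -> int) (hv : is_normalized_dval v) a b :
  unit_o v a -> vge v b 1 -> unit_o v (a + b).
Proof.
case=> a0 va hb; rewrite addrC; have [] := vge_strict hv (x := b) a0.
  by rewrite va.
by move=> h1 h2; split=> //; rewrite h2.
Qed.

Lemma vge_val (F : fieldType) (v : F -> int) x k : x != 0 -> vge v x k -> k <= v x.
Proof. by move=> /negPf x0 [/eqP|//]; rewrite x0. Qed.

Lemma zmul_unit (F : fieldType) (v : F -> int) (hv : is_normalized_dval v) z P :
  z != 0 -> unit_o v P -> (- z * P) != 0 /\ v (- z * P) = v z.
Proof.
move=> z0 [P0 vP]; have nz : - z != 0 by rewrite oppr_eq0.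
split; first by rewrite mulf_neq0.
by rewrite (vM hv) // (vN hv) // vP addr0.
Qed.

Lemma zmul_val (F : fieldType) (v : F -> int) (hv : is_normalized_dval v) z P :
  z != 0 -> P != 0 -> (- z * P) != 0 /\ v (- z * P) = v z + v P.
Proof.
move=> z0 P0; have nz : - z != 0 by rewrite oppr_eq0.
split; first by rewrite mulf_neq0.
by rewrite (vM hv) // (vN hv).
Qed.

Lemma zmul_vge (F : fieldType) (v : F -> int) (hv : is_normalized_dval v) z P m :
  z != 0 -> vge v P m -> vge v (- z * P) (v z + m).
Proof.
move=> z0 hP; apply: (vge_mul hv) => //; right; rewrite (vN hv) //.
Qed.
Lemma mx2_mul (F : fieldType) (a b c d a' b' c' d' : F) :
  mx2 a b c d *m mx2 a' b' c' d' =
  mx2 (a*a' + b*c') (a*b'+b*d') (c*a'+d*c') (c*b'+d*d').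
Proof.
apply/matrixP => i j; rewrite !mxE !big_ord_recr big_ord0 /= !mxE /=.
by case: i => [[|[|i]] Hi] //; case: j => [[|[|j]] Hj] //=; rewrite add0r.
Qed.

Lemma mx2_eta (F : fieldType) (k : 'M[F]_2) :
  k = mx2 (k 0 0) (k 0 1) (k 1 0) (k 1 1).
Proof.
by apply/matrixP => i j; rewrite !mxE; case: i => [[|[|i]] Hi] //; case: j => [[|[|j]] Hj] //=;
  congr (k _ _); apply: val_inj.
Qed.

Lemma mx2_scal (F : fieldType) (z : F) : z%:M = mx2 z 0 0 z.
Proof.
by apply/matrixP => i j; rewrite !mxE; case: i => [[|[|i]] Hi] //; case: j => [[|[|j]] Hj] //=.
Qed.

Lemma mx2_10 (F : fieldType) (a b c d : F) : mx2 a b c d 1 0 = c.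
Proof. by rewrite mxE. Qed.
Lemma mx2_11 (F : fieldType) (a b c d : F) : mx2 a b c d 1 1 = d.
Proof. by rewrite mxE. Qed.

Lemma cell_bot (F : fieldType) (z x s c : F) (k : 'M[F]_2) :
  (z%:M *m nmx x *m amx s *m wmx F *m nmx c *m k) 1 0 = - z * (k 0 0 + c * k 1 0)
  /\ (z%:M *m nmx x *m amx s *m wmx F *m nmx c *m k) 1 1 = - z * (k 0 1 + c * k 1 1).
Proof.
rewrite /nmx /amx /wmx mx2_scal [k]mx2_eta !mx2_mul mx2_10 mx2_11 !mx2_10 !mx2_11 -!mx2_eta.
split; ring.
Qed.

Lemma cell_det (F : fieldType) (z x s c : F) (k : 'M[F]_2) :
  \det (z%:M *m nmx x *m amx s *m wmx F *m nmx c *m k) = z * z * s * \det k.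
Proof.
rewrite !det_mulmx /nmx /amx /wmx mx2_scal !mx2_det; ring.
Qed.

Lemma g_bot (F : fieldType) (s : F) (k : 'M[F]_2) :
  (k *m amx s) 1 0 = k 1 0 * s /\ (k *m amx s) 1 1 = k 1 1 /\ \det (k *m amx s) = \det k * s.
Proof.
rewrite det_mulmx /amx mx2_det [k in k *m _]mx2_eta mx2_mul mx2_10 mx2_11.
split; [ring|split; ring].
Qed.

Lemma detk (F : fieldType) (k : 'M[F]_2) : \det k = k 0 0 * k 1 1 - k 0 1 * k 1 0.
Proof. by rewrite {1}[k]mx2_eta mx2_det. Qed.
From Stdlib Require Import Classical.
Unset Implicit Arguments.
Theorem lemma2p3 (F : fieldType) (v : F -> int)
  (hF : nonarch_local_field_char0 v)
  (pi : F) (hpi0 : pi != 0) (hpi : v pi = 1)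
  (n : nat) (g : 'M[F]_2)
  (hg : exists k, inK v k /\ g = k *m amx (pi ^ (uphalf n)%:Z))
  (t : int) (l : nat) (hl : (l <= n)%N) (hcell : in_cell v pi n t l g) :
  t = Num.min ((uphalf n)%:Z - 2 * l%:Z) (- (uphalf n)%:Z).
Proof.
case: hF => hv _ _ _.
case: hg => k [[kO kU] gE].
case: hcell => z [x [u [k1 [z0 uU [[k1O k1U] h00 h10] gE']]]].
set N1 := (uphalf n)%:Z in gE *.
set c' := pi ^ (- l%:Z) * u in gE'.
have [gc [gd gdet]] := g_bot (pi ^ N1) k.
have [cc cd] := cell_bot z x (pi ^ t) c' k1.
have cdet := cell_det z x (pi ^ t) c' k1.
rewrite -gE' in cc cd cdet; rewrite -gE in gc gd gdet.
have piN0 : forall m : int, pi ^ m != 0 by move=> m; rewrite expfz_neq0.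
have [u0 vu] := uU.
have c'0 : c' != 0 by rewrite mulf_neq0.
have vc' : v c' = - l%:Z by rewrite (vM hv) // (vXz hv) // vu addr0.
have [D0 vD] := kU.
have [D10 vD1] := k1U.
have ez : v (z * z * pi ^ t * \det k1) = v (\det k * pi ^ N1).
  by rewrite -gdet -cdet.
rewrite !(vM hv) ?mulf_neq0 // !(vXz hv) // vD vD1 in ez.
set e := v z in ez.
set a := k 1 0 in gc; set b := k 1 1 in gd.
have aO : in_o v a := kO 1 0.
have bO : in_o v b := kO 1 1.
have abU : unit_o v a \/ unit_o v b.
  have [bU|bnU] := (classic (vge v b 1)); last by right; apply: unit_of.
  have [aU|anU] := (classic (vge v a 1)); last by left; apply: unit_of.
  exfalso; apply: (not_unit_vge1 kU); rewrite detk -/a -/b.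
  have h1 : vge v (k 0 0 * b) 1 by apply: vge_le (vge_mul hv (kO 0 0) bU) _; lia.
  have h2 : vge v (k 0 1 * a) 1 by apply: vge_le (vge_mul hv (kO 0 1) aU) _; lia.
  exact: (@vge_add F v hv _ _ 1 h1 (vge_opp hv h2)).
have N1E : N1 = (uphalf n)%:Z by [].
have vpiN1 : v (pi ^ N1) = N1 by rewrite (vXz hv).
set P := k1 0 0 + c' * k1 1 0 in cc.
set Q := k1 0 1 + c' * k1 1 1 in cd.
have ca : a * pi ^ N1 = - z * P by rewrite -gc -cc.
have db : b = - z * Q by rewrite -gd -cd.
have cge : vge v (- z * P) N1.
  rewrite -ca; apply: vge_le (vge_mul hv aO (or_intror (le_refl _))) _; rewrite vpiN1; lia.
have dge : vge v (- z * Q) 0 by rewrite -db.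
have hPu : unit_o v P -> N1 <= e.
  move=> PU; have [h1 h2] := zmul_unit hv z0 PU; rewrite /e -h2; exact: vge_val h1 cge.
have hPa : vge v P 0 -> unit_o v a -> e <= N1.
  move=> PO [a0 va]; have h := zmul_vge hv z0 PO.
  have h0 : - z * P != 0 by rewrite -ca mulf_neq0.
  have := vge_val h0 h; rewrite -ca (vM hv) // va vpiN1 -/e; lia.
have hQb : vge v Q 0 -> unit_o v b -> e <= 0.
  move=> QO [b0 vb]; have h := zmul_vge hv z0 QO.
  have h0 : - z * Q != 0 by rewrite -db.
  have := vge_val h0 h; rewrite -db vb -/e; lia.
have hQu : unit_o v Q -> 0 <= e.
  move=> QU; have [h1 h2] := zmul_unit hv z0 QU; rewrite /e -h2; exact: vge_val h1 dge.
have hQv : forall m, Q != 0 -> v Q = m -> 0 <= e + m /\ (unit_o v b -> e + m = 0).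
  move=> m Q0 vQ; have [h1 h2] := zmul_val hv z0 Q0; rewrite /e -vQ -h2; split.
    exact: vge_val h1 dge.
  by case; rewrite db.
have hc'10 : vge v (c' * k1 1 0) (- l%:Z + n%:Z).
  by apply: (@vge_mul F v hv c' (k1 1 0) (- l%:Z) n _ h10); right; rewrite vc'.
have hdet1 : \det k1 = P * k1 1 1 - Q * k1 1 0 by rewrite detk /P /Q; ring.
have c'O : l = 0%N -> vge v c' 0 by move=> l0; right; rewrite vc' l0.
have [n0|n1] := eqVneq n 0%N.
  have l0 : l = 0%N by move: hl; rewrite n0; lia.
  have PO : vge v P 0.
    refine (@vge_add F v hv _ _ 0 (k1O 0 0) _); apply: vge_le hc'10 _; lia.
  have QO : vge v Q 0.
    refine (@vge_add F v hv _ _ 0 (k1O 0 1) _); apply: vge_le (vge_mul hv (c'O l0) (k1O 1 1)) _; lia.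
  have PQU : unit_o v P \/ unit_o v Q.
    have [bU|bnU] := (classic (vge v Q 1)); last by right; apply: unit_of.
    have [aU|anU] := (classic (vge v P 1)); last by left; apply: unit_of.
    exfalso; apply: (not_unit_vge1 k1U); rewrite hdet1.
    have h1 : vge v (P * k1 1 1) 1 by apply: vge_le (vge_mul hv aU (k1O 1 1)) _; lia.
    have h2 : vge v (Q * k1 1 0) 1 by apply: vge_le (vge_mul hv bU (k1O 1 0)) _; lia.
    exact: (@vge_add F v hv _ _ 1 h1 (vge_opp hv h2)).
  have e1 : 0 <= e by case: PQU => [/hPu|/hQu]; lia.
  have e2 : e <= 0 by case: abU => [/(hPa PO)|/(hQb QO)]; lia.
  rewrite l0; lia.
have u1 : unit_o v (1 : F) by split; [exact: oner_neq0|exact: v1].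
have K00U : unit_o v (k1 0 0).
  have h : vge v (k1 0 0 - 1) 1 by apply: vge_le h00 _; lia.
  by have := unit_add hv u1 h; rewrite addrC subrK.
have K11U : unit_o v (k1 1 1).
  apply: unit_of (k1O 1 1) _ => bU.
  apply: (not_unit_vge1 k1U); rewrite detk.
  have h1 : vge v (k1 0 0 * k1 1 1) 1 by apply: vge_le (vge_mul hv (k1O 0 0) bU) _; lia.
  have h2 : vge v (k1 0 1 * k1 1 0) 1 by apply: vge_le (vge_mul hv (k1O 0 1) h10) _; lia.
  exact: (@vge_add F v hv _ _ 1 h1 (vge_opp hv h2)).
have PU : (l < n)%N -> unit_o v P.
  move=> ln; rewrite /P; refine (@unit_add F v hv _ _ K00U _); apply: vge_le hc'10 _; lia.
have QV : (0 < l)%N -> Q != 0 /\ v Q = - l%:Z.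
  move=> l0; have [K110 vK11] := K11U.
  have y0 : c' * k1 1 1 != 0 by rewrite mulf_neq0.
  have vy : v (c' * k1 1 1) = - l%:Z by rewrite (vM hv) // vc' vK11 addr0.
  have hb : v (c' * k1 1 1) + 1 <= 0 by rewrite vy; lia.
  have [h1 h2] := vge_strict hv (x := k1 0 1) y0 (vge_le (k1O 0 1) hb).
  by rewrite /Q; split=> //; rewrite h2.
have N1b : (1 <= N1 <= n%:Z) by rewrite N1E; lia.
have [l0|lpos] := eqVneq l 0%N.
  have QO : vge v Q 0.
    refine (@vge_add F v hv _ _ 0 (k1O 0 1) _); apply: vge_le (vge_mul hv (c'O l0) (k1O 1 1)) _; lia.
  have e1 := hPu (PU ltac:(lia)).
  have e2 : e <= N1.
    case: abU => [aU|bU]; [|have := hQb QO bU; lia].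
    apply: hPa aU; apply: vge_le (or_intror (le_refl _) : vge v P (v P)) _.
    by case: (PU ltac:(lia)) => _ ->.
  rewrite l0; lia.
have [Q0 vQ] := QV ltac:(lia).
have [h1 h2] := hQv _ Q0 vQ.
have [ln|ln] := eqVneq l n.
  have PO : vge v P 0.
    refine (@vge_add F v hv _ _ 0 (k1O 0 0) _); apply: vge_le hc'10 _; lia.
  case: abU => [aU|bU]; [have := hPa PO aU | have := h2 bU]; rewrite ln; lia.
have e1 := hPu (PU ltac:(lia)).
case: abU => [aU|bU]; last by have := h2 bU; lia.
have := hPa (vge_le (or_intror (le_refl _) : vge v P (v P)) _) aU.
have [_ vP] := PU ltac:(lia).
rewrite vP => /(_ (lexx 0)) e2; lia.
Qed.
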